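(* Let $q$ be a prime power, $n=q^4-1$, and let $I_x$ be a cyclotomic coset of cardinality $2$ with minimal representative $x$. Then $I_x$ is an SR-asymmetric coset if and only if there exists $z\in I_x$ such that $n-qz<x$ (where $n-qz$ is reduced modulo $n$ into $\{0,\ldots,n-1\}$).
   Context: Identify $\mathbb{Z}_n$ with $\{0,\ldots,n-1\}$, all arithmetic modulo $n$. The cyclotomic coset of $x$ with respect to $q^2$ is $I_x=\{x,\,q^2x\bmod n\}$; its minimal representative is its least element. The (Hermitian) reciprocal coset of $I_x$ is $I_{n-qx}$. $I_x$ is symmetric if $I_{n-qx}=I_x$ and asymmetric otherwise. If $I_x$ is asymmetric with reciprocal coset $I_y$, with $x,y$ the minimal representatives and $x<y$, then $I_x$ is the FR-asymmetric coset and $I_y$ the SR-asymmetric coset of the pair. *)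

(* Defs.v *)
(* arithmetic on nat, elements of Z_n identified with {0,...,n-1}. *)
From mathcomp Require Import all_boot.
Set Implicit Arguments. Unset Strict Implicit. Unset Printing Implicit Defensive.

Definition coset (n q x : nat) : seq nat := undup [:: x %% n; (q ^ 2 * x) %% n].

Definition minrep (n q x : nat) : nat := minn (x %% n) ((q ^ 2 * x) %% n).

Definition recip (n q x : nat) : nat := (n - (q * x) %% n) %% n.

Definition symmetric_coset (n q x : nat) : Prop :=
  coset n q (recip n q x) =i coset n q x.

Definition asymmetric_coset (n q x : nat) : Prop := ~ symmetric_coset n q x.

Definition SR_asymmetric (n q x : nat) : Prop :=
  asymmetric_coset n q x /\ minrep n q (recip n q x) < minrep n q x.

(* Main.v *)
Require Import Defs.
From mathcomp Require Import all_boot.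

Lemma recip_mod0 n q z : 0 < n -> (recip n q z + q * z) %% n = 0.
Proof.
move=> n0; rewrite /recip modnDml -modnDmr subnK ?modnn //.
by apply: ltnW; rewrite ltn_pmod.
Qed.

Lemma recip_lt n q z : 0 < n -> recip n q z < n.
Proof. by move=> n0; rewrite /recip ltn_pmod. Qed.

Lemma recip_char n q z r : 0 < n -> r < n -> (r + q * z) %% n = 0 ->
  recip n q z = r.
Proof.
move=> n0 rn h.
have e : (recip n q z + q * z == r + q * z %[mod n]) by rewrite h recip_mod0.
rewrite eqn_modDr !modn_small ?recip_lt // in e.
exact/eqP.
Qed.

Lemma recipQ n q x : 0 < n ->
  recip n q ((q ^ 2 * x) %% n) = (q ^ 2 * recip n q x) %% n.
Proof.
move=> n0; apply: recip_char => //; first by rewrite ltn_pmod.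
rewrite modnDml -modnDmr modnMmr modnDmr.
have -> : q * (q ^ 2 * x) = q ^ 2 * (q * x) by rewrite mulnCA.
by rewrite -mulnDr -modnMmr recip_mod0 // muln0 mod0n.
Qed.

Theorem mainTheorem10 (p k q : nat) :
  prime p -> 0 < k -> q = p ^ k ->
  forall x : nat, x < q ^ 4 - 1 ->
    size (coset (q ^ 4 - 1) q x) = 2 ->
    minrep (q ^ 4 - 1) q x = x ->
    (SR_asymmetric (q ^ 4 - 1) q x <->
     exists z, z \in coset (q ^ 4 - 1) q x /\ recip (q ^ 4 - 1) q z < x).
Proof.
move=> _ _ _ x; set n := q ^ 4 - 1 => xn _ hm.
have n0 : 0 < n by apply: leq_ltn_trans xn.
have xm : x %% n = x by rewrite modn_small.
have hQ : x <= (q ^ 2 * x) %% n.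
  by rewrite -{1}hm /minrep geq_minr.
have ry : recip n q x %% n = recip n q x by rewrite modn_small ?recip_lt.
have memc : forall z, z \in coset n q x -> z = x \/ z = (q ^ 2 * x) %% n.
  move=> z; rewrite /coset mem_undup !inE xm.
  by case/orP => /eqP ->; [left | right].
set y := recip n q x.
have mr : minrep n q y = minn y ((q ^ 2 * y) %% n) by rewrite /minrep ry.
have key : (exists z, z \in coset n q x /\ recip n q z < x) <-> minrep n q y < x.
  rewrite mr; split.
  - case=> z [/memc [->|->] hz].
      by apply: leq_ltn_trans hz; rewrite geq_minl.
    by move: hz; rewrite recipQ // => hz; apply: leq_ltn_trans hz; rewrite geq_minr.
  - rewrite gtn_min => /orP [h|h].
      by exists x; split => //; rewrite /coset mem_undup !inE xm eqxx.
    exists ((q ^ 2 * x) %% n); split; first by rewrite /coset mem_undup !inE eqxx orbT.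
    by rewrite recipQ.
split; first by case=> _; rewrite hm => h; exact: (proj2 key h).
move=> h0; have hlt := proj1 key h0; split; last by rewrite hm.
move=> hs.
have : minrep n q y \in coset n q y.
  rewrite mr /coset mem_undup !inE ry.
  by case: (leqP y ((q ^ 2 * y) %% n)) => hc; rewrite eqxx ?orbT.
rewrite hs => /memc [e|e]; move: hlt; rewrite e ?ltnn //.
by move=> h; move: (leq_trans h hQ); rewrite ltnn.
Qed.
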